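(* For an integer $n\geq 0$ and $z\in\mathbb{C}$, let $$\mathcal{T}_n(z) := \sum_{m=0}^n \binom{n}{m} m^m\,(n-m+z)^{n-m}$$ (with $0^0\equiv 1$), and let $\Gamma(a,x)=\int_x^\infty t^{a-1}e^{-t}\,dt$ denote the (upper) incomplete Gamma function, $\mathrm{Re}(a)>0$. Then $$\mathcal{T}_n(z) = e^{z+n}\, \Gamma(n+1,z+n).$$
   Context: Convention: $0^0\equiv1$. For $a=n+1$ with $n$ a nonnegative integer, the integrand $t^{n}e^{-t}$ is entire, so $\Gamma(n+1,x)=\int_x^\infty t^{n}e^{-t}\,dt$ is well defined for complex $x$ by integrating along any path from $x$ to $+\infty$ (e.g. a horizontal ray to the right). *)

(* Defs.v *)
From Stdlib Require Import Reals.
From Coquelicot Require Import Coquelicot.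
Open Scope R_scope.

Definition Cexp (z : C) : C :=
  (exp (Re z) * cos (Im z), exp (Re z) * sin (Im z)).

(* Natural-number power on C; pow_n w 0 = 1, so 0^0 = 1. *)
Definition Cpown (w : C) (k : nat) : C := pow_n (K := C_Ring) w k.

Definition calT (n : nat) (z : C) : C :=
  sum_n (G := C_AbelianGroup)
    (fun m => Cmult (RtoC (Binomial.C n m))
               (Cmult (Cpown (RtoC (INR m)) m)
                      (Cpown (Cplus (RtoC (INR (n - m))) z) (n - m)))) n.

Definition gamma_integrand (n : nat) (x : C) (s : R) : C :=
  Cmult (Cpown (Cplus x (RtoC s)) n) (Cexp (Copp (Cplus x (RtoC s)))).

(* Upper incomplete Gamma function Gamma(n+1, x) for complex x:
   integral of t^n e^{-t} along the horizontal ray from x to +oo. *)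
Definition upper_gamma_nat (n : nat) (x : C) : C :=
  RInt_gen (V := C_R_CompleteNormedModule) (gamma_integrand n x)
    (at_point 0) (Rbar_locally p_infty).

(* Main.v *)
Require Import Defs.
From Stdlib Require Import Reals Lra Lia FunctionalExtensionality.
From Coquelicot Require Import Coquelicot.
From HB Require Import structures.
From mathcomp Require Import all_boot all_order all_algebra.
From mathcomp Require Import Rstruct.
Import GRing.Theory.

Module RealPart.
Local Open Scope R_scope.

Lemma exp_nat_mul (n : nat) (t : R) : exp (INR n * t) = exp t ^ n.
Proof.
induction n as [|n IH].
- simpl; rewrite Rmult_0_l; apply exp_0.
- rewrite S_INR Rmult_plus_distr_r Rmult_1_l exp_plus IH /=; ring.
Qed.

Lemma pow_exp_bound (m : nat) (s : R) : 0 < s ->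
  s ^ S m * exp (- s) <= INR (S m) ^ S m.
Proof.
intros hs.
set (c := INR (S m)).
assert (hc : 0 < c) by (unfold c; apply lt_0_INR; lia).
set (t := s / c).
assert (ht : 0 < t) by (unfold t; apply Rdiv_lt_0_compat; lra).
assert (hst : s = c * t) by (unfold t; field; lra).
assert (he : exp s = exp t ^ S m) by (rewrite hst; unfold c; apply exp_nat_mul).
assert (hte : t ^ S m <= exp t ^ S m).
{ apply pow_incr; split; [lra|]. pose proof (exp_ineq1_le t); lra. }
rewrite exp_Ropp he.
assert (hpos : 0 < exp t ^ S m) by (apply pow_lt; apply exp_pos).
apply (Rmult_le_reg_r (exp t ^ S m)); auto.
rewrite Rmult_assoc Rinv_l; [|lra].
rewrite Rmult_1_r hst Rpow_mult_distr.
apply Rmult_le_compat_l; [apply pow_le; lra | exact hte].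
Qed.

Lemma powexp (m : nat) : is_lim (fun s => s ^ m * exp (- s)) p_infty 0.
Proof.
apply is_lim_le_le_loc with (f := fun _ => 0) (g := fun s => INR (S m) ^ S m * / s).
- exists 0. intros s hs. split.
  + apply Rmult_le_pos; [apply pow_le; lra | apply Rlt_le, exp_pos].
  + pose proof (pow_exp_bound m s hs) as hb.
    simpl in hb.
    apply (Rmult_le_reg_r s); [lra|].
    replace (INR (S m) ^ S m * / s * s) with (INR (S m) ^ S m) by (field; lra).
    replace (s ^ m * exp (- s) * s) with (s * s ^ m * exp (- s)) by ring.
    exact hb.
- apply is_lim_const.
- replace (Rbar.Finite 0) with (Rbar_mult (Rbar.Finite (pow (INR (S m)) (S m))) (Rbar.Finite 0)) by (simpl; f_equal; ring).
  apply is_lim_scal_l.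
  replace (Rbar.Finite 0) with (Rbar_inv p_infty) by reflexivity.
  apply is_lim_inv; [apply is_lim_id | discriminate].
Qed.

Fixpoint Hk (k : nat) (s : R) : R :=
  match k with
  | O => - exp (- s)
  | S k' => - (s ^ S k' * exp (- s)) + INR (S k') * Hk k' s
  end.

Lemma Hk_derive (k : nat) (s : R) : is_derive (Hk k) s (s ^ k * exp (- s)).
Proof.
induction k as [|k IH]; simpl Hk.
- auto_derive; auto. simpl; ring.
- apply is_derive_ext with (f := fun s => - (s ^ S k * exp (- s)) + INR (S k) * Hk k s); [reflexivity|].
  replace (s ^ S k * exp (- s)) with
    ((- (INR (S k) * s ^ k * exp (- s) - s ^ S k * exp (- s))) + INR (S k) * (s ^ k * exp (- s))) by ring.
  apply: is_derive_plus.
  + auto_derive; auto. simpl pred.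
    change (INR (S k)) with (match k with O => 1 | S _ => INR k + 1 end); change (s ^ S k) with (s * s ^ k); ring.
  + exact (is_derive_scal (Hk k) s (INR (S k)) _ IH).
Qed.

Lemma Hk_0 (k : nat) : Hk k 0 = - INR (Factorial.fact k).
Proof.
induction k as [|k IH]; simpl Hk.
- rewrite Ropp_0 exp_0; simpl; ring.
- rewrite IH. rewrite fact_simpl mult_INR. simpl. ring.
Qed.

Lemma lim_scal0 (f : R -> R) (a : R) : is_lim f p_infty 0 -> is_lim (fun s => a * f s) p_infty 0.
Proof. intro H. apply is_lim_scal_l with (a:=a) in H. simpl in H. rewrite Rmult_0_r in H. exact H. Qed.

Lemma lim_plus0 (f g : R -> R) : is_lim f p_infty 0 -> is_lim g p_infty 0 -> is_lim (fun s => f s + g s) p_infty 0.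
Proof. intros H1 H2. pose proof (is_lim_plus' f g p_infty 0 0 H1 H2) as H. rewrite Rplus_0_r in H. exact H. Qed.

Lemma Hk_lim (k : nat) : is_lim (Hk k) p_infty 0.
Proof.
induction k as [|k IH]; simpl Hk.
- apply is_lim_ext with (f := fun s => (-1) * (s ^ 0 * exp (- s))).
  { intros y; simpl; ring. }
  apply lim_scal0, powexp.
- apply is_lim_ext with (f := fun s => (-1) * (s ^ S k * exp (- s)) + INR (S k) * Hk k s).
  { intros y; simpl; ring. }
  apply lim_plus0; apply lim_scal0; [apply powexp | exact IH].
Qed.

End RealPart.
Import RealPart.

Module CplxPart.
Local Open Scope R_scope.

Lemma antider_gen {V : CompleteNormedModule R_AbsRing} (f F : R -> V) (L : V) :
  (forall s, is_derive F s (f s)) -> (forall s, continuous f s) ->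
  filterlim F (Rbar_locally p_infty) (locally L) ->
  is_RInt_gen f (at_point 0) (Rbar_locally p_infty) (minus L (F 0)).
Proof.
intros hd hc hl.
unfold is_RInt_gen.
apply filterlimi_lim_ext_loc with (f := fun ab => minus (F (snd ab)) (F (fst ab))).
  exists (fun a => a = 0) (fun _ => True).
  + reflexivity.
  + apply filter_true.
  + intros x y -> _. simpl. apply is_RInt_derive; intros; [apply hd | apply hc].
- apply filterlim_ext_loc with (f := fun ab => minus (F (snd ab)) (F 0)).
    exists (fun a => a = 0) (fun _ => True).
    * reflexivity.
    * apply filter_true.
    * intros x y -> _. reflexivity.
  + apply (filterlim_comp _ _ _ (fun ab : R * R => F (snd ab)) (fun v => minus v (F 0)) _ (locally L)).
    * apply (filterlim_comp _ _ _ snd F _ (Rbar_locally p_infty)); [apply filterlim_snd | exact hl].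
    * apply (continuous_minus (fun v => v) (fun _ => F 0) L).
      -- apply continuous_id.
      -- apply continuous_const.
Qed.

End CplxPart.
Import CplxPart.

Module AlgM.
From mathcomp Require Import ring zify.
Import GRing.Theory.
Local Open Scope ring_scope.

Lemma bin_prod (n k m : nat) : (m <= k)%N -> (k <= n)%N ->
  ('C(n,m) * 'C(n-m,k-m) = 'C(n,k) * 'C(k,m))%N.
Proof.
move=> hmk hkn.
have pos : (0 < m`! * ((k-m)`! * (n-k)`!))%N by rewrite !muln_gt0 !fact_gt0.
apply/eqP; rewrite -(eqn_pmul2r pos); apply/eqP.
have e1 : (n - m - (k - m) = n - k)%N by lia.
have h1 := bin_fact (_ : (k - m <= n - m)%N).
have h2 := bin_fact (_ : (m <= n)%N).
have h3 := bin_fact hmk.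
have h4 := bin_fact hkn.
transitivity ('C(n,m) * m`! * ('C(n-m,k-m) * ((k-m)`! * (n-m-(k-m))`!)))%N.
  by rewrite e1; ring.
rewrite h1; last by lia.
transitivity ('C(n,m) * (m`! * (n-m)`!))%N; first by ring.
rewrite h2; last by lia.
rewrite -h4 -h3; ring.
Qed.

Section Alg.
Variable R : comNzRingType.

Definition S (N l : nat) : R := \sum_(m < N.+1) ('C(N,m)%:R * (-1)^+(N-m) * m%:R^+l).

Lemma S0 N : S N 0 = (N == 0%N)%:R.
Proof.
rewrite /S.
have := exprDn (-1 : R) 1 N.
rewrite addNr expr0n => ->.
apply: eq_bigr => i _.
by rewrite expr0 mulr1 expr1n mulr1 mulr_natl.
Qed.

Lemma S_step N j : S N.+1 j.+1 = N.+1%:R * \sum_(l < j.+1) 'C(j,l)%:R * S N l.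
Proof.
rewrite /S big_ord_recl /= expr0n /= mulr0 add0r.
rewrite (eq_bigr (fun i : 'I_N.+1 => N.+1%:R * ('C(N,i)%:R * (-1)^+(N-i) *
            \sum_(l < j.+1) 'C(j,l)%:R * (i%:R)^+l))); last first.
  move=> i _.
  rewrite /bump /= add1n subSS exprS.
  have -> : ((i.+1)%:R : R) ^+ j = \sum_(l < j.+1) 'C(j,l)%:R * (i%:R)^+l.
    rewrite -addn1 natrD exprD1n; apply: eq_bigr => l _; by rewrite mulr_natl.
  have H := mul_bin_diag N.+1 i. rewrite /= in H.
  set s := \sum_(_ < _) _.
  have H' : ('C(N.+1,i.+1)%:R * i.+1%:R : R) = N.+1%:R * 'C(N,i)%:R.
    by rewrite -!natrM mulnC -H.
  transitivity (('C(N.+1,i.+1)%:R * i.+1%:R) * ((-1)^+(N-i) * s)); first by ring.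
  rewrite H'; ring.
rewrite -mulr_sumr; congr (_ * _).
rewrite (eq_bigr (fun i : 'I_N.+1 => \sum_(l < j.+1) 'C(N,i)%:R * (-1)^+(N-i) * ('C(j,l)%:R * (i%:R)^+l))); last by move=> i _; rewrite mulr_sumr.
rewrite exchange_big /=; apply: eq_bigr => l _.
rewrite mulr_sumr; apply: eq_bigr => i _.
by rewrite !mulrA [_ * 'C(j,l)%:R]mulrC -!mulrA; congr (_ * _); rewrite mulrCA.
Qed.

Lemma fdiff j : forall N, (j <= N)%N -> S N j = if j == N then N`!%:R else 0.
Proof.
elim/ltn_ind: j => j IH N hjN.
case: j IH hjN => [|j] IH hjN.
  by rewrite S0; case: N hjN.
case: N hjN => [//|N] hjN.
rewrite S_step eqSS.
have hj : (j <= N)%N by [].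
rewrite big_ord_recr /=.
rewrite big1; last first.
  move=> l _. rewrite IH //; last by apply: leq_trans (ltnW (ltn_ord l)) hj.
  - have : (l < N)%N by apply: leq_trans (ltn_ord l) hj.
    by rewrite ltn_neqAle => /andP [/negbTE -> _]; rewrite mulr0.
  - by apply: leq_trans (ltn_ord l) _.
rewrite add0r IH // binn mul1r.
case: (j == N); last by rewrite mulr0.
by rewrite factS natrM.
Qed.

Lemma reidx (F : nat -> R) n m : (m <= n)%N ->
  \sum_(i < (n-m).+1) F i = \sum_(k < n.+1 | (m <= k)%N) F (k - m)%N.
Proof.
move=> hmn.
rewrite (eq_bigl (fun k : 'I_n.+1 => true && (m <= k)%N)) //.
rewrite -(@big_geq_mkord _ _ _ m n.+1 xpredT (fun k => F (k - m)%N)).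
change (\sum_(m <= i < n.+1) F (i - m)%N) with (\sum_(0 + m <= i < n.+1) F (i - m)%N).
rewrite (@big_addn _ _ _ 0 n.+1 m xpredT) -(big_mkord xpredT) subSn //.
by apply: eq_bigr => i _; rewrite addnK.
Qed.

Lemma mainalg (x : R) n : \sum_(m < n.+1) 'C(n,m)%:R * (m%:R^+m * (x - m%:R)^+(n-m))
   = \sum_(k < n.+1) ('C(n,k) * k`!)%:R * x^+(n-k).
Proof.
pose G (k m : nat) : R := 'C(n,k)%:R * 'C(k,m)%:R * (-1)^+(k-m) * m%:R^+k * x^+(n-k).
transitivity (\sum_(m < n.+1) \sum_(k < n.+1 | (m <= k)%N) G k m).
  apply: eq_bigr => m _.
  rewrite exprDn !mulr_sumr (reidx (fun i => 'C(n, m)%:R * (m%:R ^+ m * (x ^+ (n - m - i) * (- m%:R) ^+ i *+ 'C(n - m, i))))); last by rewrite -ltnS.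
  apply: eq_bigr => k /= hmk.
  rewrite /G.
  have hkn : (k <= n)%N by rewrite -ltnS.
  have e1 : (n - m - (k - m) = n - k)%N by lia.
  rewrite e1 -mulrN1 exprMn -mulr_natr.
  have -> : (m%:R ^+ k : R) = m%:R^+m * m%:R^+(k-m) by rewrite -exprD subnKC.
  have -> : ('C(n,k)%:R * 'C(k,m)%:R : R) = 'C(n,m)%:R * 'C(n-m,k-m)%:R by rewrite -!natrM bin_prod.
  ring.
rewrite (exchange_big_dep xpredT) //=.
apply: eq_bigr => k _.
rewrite natrM; have := fdiff k k (leqnn k); rewrite eqxx /S => <-.
rewrite (big_ord_widen n.+1 (fun m : nat => 'C(k, m)%:R * (-1) ^+ (k - m) * m%:R ^+ k)) ?ltn_ord //.
rewrite !mulr_sumr mulr_suml; apply: eq_big => [m|m _]; first by rewrite ltnS.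
rewrite /G; ring.
Qed.
End Alg.

End AlgM.
Import AlgM.


Definition CC : Type := C.
HB.instance Definition _ := Choice.on CC.
Lemma CC_addA : associative (Cplus : CC -> CC -> CC). Proof. intros a b c; unfold CC in *; ring. Qed.
Lemma CC_addC : commutative (Cplus : CC -> CC -> CC). Proof. intros a b; unfold CC in *; ring. Qed.
Lemma CC_add0 : left_id (RtoC 0) (Cplus : CC -> CC -> CC). Proof. intros a; unfold CC in *; ring. Qed.
Lemma CC_addN : left_inverse (RtoC 0) (Copp : CC -> CC) (Cplus : CC -> CC -> CC). Proof. intros a; unfold CC in *; ring. Qed.
HB.instance Definition _ := GRing.isZmodule.Build CC CC_addA CC_addC CC_add0 CC_addN.
Lemma CC_mulA : associative (Cmult : CC -> CC -> CC). Proof. intros a b c; unfold CC in *; ring. Qed.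
Lemma CC_mulC : commutative (Cmult : CC -> CC -> CC). Proof. intros a b; unfold CC in *; ring. Qed.
Lemma CC_mul1 : left_id (RtoC 1) (Cmult : CC -> CC -> CC). Proof. intros a; unfold CC in *; ring. Qed.
Lemma CC_mulD : left_distributive (Cmult : CC -> CC -> CC) (Cplus : CC -> CC -> CC). Proof. intros a b c; unfold CC in *; ring. Qed.
Lemma CC_10 : (RtoC 1 : CC) != (RtoC 0 : CC).
Proof. apply/eqP. intro H. injection H. lra. Qed.
HB.instance Definition _ := GRing.Zmodule_isComNzRing.Build CC CC_mulA CC_mulC CC_mul1 CC_mulD CC_10.

Local Open Scope ring_scope.

Lemma natCC n : (n%:R : CC) = RtoC (INR n).
Proof.
elim: n => [|n IH]; first by [].
rewrite -addn1 natrD IH plus_INR /=.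
apply: injective_projections => /=; ring.
Qed.

Lemma powCC (w : CC) k : Cpown w k = w ^+ k.
Proof. elim: k => [|k IH] //. by rewrite exprS -IH. Qed.

Lemma sumCC (f : nat -> CC) n : sum_n f n = \sum_(i < n.+1) f i.
Proof.
elim: n => [|n IH]; first by rewrite sum_O big_ord_recr big_ord0 /= add0r.
by rewrite sum_Sn IH [in RHS]big_ord_recr.
Qed.

Lemma factE k : Factorial.fact k = k`!.
Proof. elim: k => [|k IH] //. by rewrite factS -IH. Qed.

Lemma binR n m : (m <= n)%N -> Binomial.C n m = INR 'C(n,m).
Proof.
move=> h.
have e := bin_fact h.
rewrite /Binomial.C !factE -e !mult_INR.
have h1 : INR m`! <> 0%R by apply: not_0_INR; move: (fact_gt0 m); case: (m`!).
have h2 : INR (n - m)`! <> 0%R by apply: not_0_INR; move: (fact_gt0 (n - m)); case: ((n - m)`!).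
change ((n - m)%coq_nat) with (n - m)%N. by field.
Qed.

Lemma RtoC_powCC (s : R) k : (RtoC s : CC) ^+ k = RtoC (s ^ k).
Proof.
elim: k => [|k IH] //. rewrite exprS IH /=. by rewrite RtoC_mult.
Qed.

Local Open Scope R_scope.
Lemma Cexp_shift (x : C) (s : R) :
  Cexp (Copp (Cplus x (RtoC s))) = Cmult (RtoC (exp (- s))) (Cexp (Copp x)).
Proof.
destruct x as [a b]; unfold Cexp, Cmult, Copp, Cplus, RtoC; simpl.
replace (- (b + 0)) with (- b) by ring.
replace (- (a + s)) with (- a + - s) by ring.
rewrite exp_plus.
apply: injective_projections => /=; ring.
Qed.

Lemma Cexp_inv (x : C) : Cmult (Cexp x) (Cexp (Copp x)) = RtoC 1.
Proof.
destruct x as [a b]; unfold Cexp, Cmult, Copp, RtoC; simpl.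
rewrite cos_neg sin_neg.
have e : (exp a * exp (- a) = 1) by rewrite -exp_plus Rplus_opp_r exp_0.
have sc := sin2_cos2 b; unfold Rsqr in sc.
apply: injective_projections => /=.
- transitivity (exp a * exp (- a) * (sin b * sin b + cos b * cos b)); first by simpl; ring.
  by rewrite e sc; ring.
- transitivity (exp a * exp (- a) * 0); first by simpl; ring.
  ring.
Qed.


Module IntegPart.
Local Open Scope R_scope.

Lemma scalC (r : R) (w : C) : @scal R_Ring C_R_ModuleSpace r w = Cmult (RtoC r) w.
Proof.
destruct w as [a b]; unfold Cmult, RtoC; simpl.
apply: injective_projections => /=; rewrite /scal /= /mult /=; ring.
Qed.

Lemma int_k (k : nat) (w : C) :
 is_RInt_gen (V := C_R_NormedModule) (fun s => Cmult (RtoC (s^k * exp(-s))) w)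
   (at_point 0) (Rbar_locally p_infty) (Cmult (RtoC (INR (Factorial.fact k))) w).
Proof.
have h := antider_gen (V := C_R_CompleteNormedModule)
  (fun s => @scal R_Ring C_R_ModuleSpace (s^k*exp(-s)) w)
  (fun s => @scal R_Ring C_R_ModuleSpace (Hk k s) w)
  (@scal R_Ring C_R_ModuleSpace 0 w).
have e1 : (fun s => Cmult (RtoC (s^k * exp(-s))) w) = (fun s => @scal R_Ring C_R_ModuleSpace (s^k*exp(-s)) w).
  by apply: functional_extensionality => s; rewrite scalC.
rewrite e1.
have e2 : Cmult (RtoC (INR (Factorial.fact k))) w =
   minus (@scal R_Ring C_R_ModuleSpace 0 w) (@scal R_Ring C_R_ModuleSpace (Hk k 0) w).
  rewrite !scalC Hk_0 /minus /plus /opp /=.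
  destruct w as [a b]; unfold Cmult, Cplus, Copp, RtoC; simpl.
  apply: injective_projections => /=; rewrite /plus /Hierarchy.opp /=; ring.
rewrite e2.
apply: h.
- move=> s. apply: (is_derive_scal_l (K := R_AbsRing) (V := C_R_NormedModule)). apply: Hk_derive.
- move=> s. apply: (continuous_scal_l (K := R_AbsRing) (V := C_R_NormedModule)).
  apply: ex_derive_continuous. auto_derive. auto.
- apply: (filterlim_comp _ _ _ (Hk k) (fun r => @scal R_Ring C_R_ModuleSpace r w) _ (locally 0)).
  + exact: Hk_lim.
  + exact: (filterlim_scal_l (K := R_AbsRing) (V := C_R_NormedModule)).
Qed.

End IntegPart.
Import IntegPart.


Lemma sum_int n (w : nat -> CC) :
  is_RInt_gen (V := C_R_NormedModule)
    (fun s => (\sum_(k < n) (Cmult (RtoC (s^k * exp(-s))) (w k) : CC))%R)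
    (at_point 0) (Rbar_locally p_infty)
    (\sum_(k < n) (Cmult (RtoC (INR (Factorial.fact k))) (w k) : CC))%R.
Proof.
elim: n => [|n IH].
- have h := antider_gen (V := C_R_CompleteNormedModule) (fun _ => RtoC 0) (fun _ => RtoC 0) (RtoC 0).
  have e : (fun s : R => (\sum_(k < 0) (Cmult (RtoC (s^k * exp(-s))) (w k) : CC))%R) = (fun _ => RtoC 0).
    by apply: functional_extensionality => s; rewrite big_ord0.
  rewrite e big_ord0.
  have -> : (0%R : CC) = minus (RtoC 0) (RtoC 0).
    by apply: injective_projections; rewrite /minus /plus /opp /=; ring.
  apply: h.
  + move=> s; apply: is_derive_const.
  + move=> s; apply: continuous_const.
  + apply: filterlim_const.
- have e : (fun s : R => (\sum_(k < n.+1) (Cmult (RtoC (s^k * exp(-s))) (w k) : CC))%R) =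
    (fun s => plus (\sum_(k < n) (Cmult (RtoC (s^k * exp(-s))) (w k) : CC))%R (Cmult (RtoC (s^n * exp(-s))) (w n))).
    by apply: functional_extensionality => s; rewrite big_ord_recr.
  rewrite e big_ord_recr /=.
  exact: (is_RInt_gen_plus _ _ _ _ IH (int_k n (w n))).
Qed.

Module Fin.
From mathcomp Require Import ring.
Local Open Scope ring_scope.

Lemma mulCC (a b : C) : Cmult a b = (a : CC) * b. Proof. by []. Qed.
Lemma addCC (a b : C) : Cplus a b = (a : CC) + b. Proof. by []. Qed.

Lemma rearr (a b c d : CC) m : a * b *+ m * (c * d) = b * c * (a *+ m * d).
Proof. ring. Qed.

Lemma integrand_eq n (x : CC) :
  gamma_integrand n x = (fun s => \sum_(k < n.+1)
     (Cmult (RtoC (s^k * exp(-s))) (x ^+ (n - k) *+ 'C(n, k) * Cexp (Copp x)) : CC)).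
Proof.
apply: functional_extensionality => s.
rewrite /gamma_integrand powCC Cexp_shift.
rewrite addCC exprDn mulCC.
rewrite mulr_suml; apply: eq_bigr => k _.
rewrite RtoC_powCC RtoC_mult !mulCC.
exact: rearr.
Qed.

Lemma fin_rearr (a c d : CC) (C F : nat) : c * d = 1 ->
  (C * F)%:R * a = c * (F%:R * (a *+ C * d)).
Proof.
move=> h.
transitivity (F%:R * C%:R * a * (c * d)); last by ring.
rewrite h natrM; ring.
Qed.

Lemma addsub (a b c : CC) : a - b + c = c + a - b.
Proof. ring. Qed.

Lemma calT_eq n z : calT n z =
  \sum_(k < n.+1) (('C(n,k) * k`!)%:R * (Cplus z (RtoC (INR n)) : CC) ^+ (n - k)).
Proof.
rewrite /calT sumCC.
set x : CC := Cplus z (RtoC (INR n)).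
transitivity (\sum_(m < n.+1) 'C(n,m)%:R * (m%:R^+m * (x - m%:R)^+(n-m)) : CC).
  apply: eq_bigr => m _.
  have hm : (m <= n)%N by rewrite -ltnS.
  rewrite binR // !powCC -!natCC !mulCC.
  change ((n - m)%coq_nat) with (n - m)%N.
  rewrite addCC.
  have E : ((n - m)%:R + (z : CC) : CC) = x - m%:R.
    rewrite /x addCC -natCC natrB //. exact: addsub.
  by rewrite -E.
exact: (@mainalg CC x n).
Qed.
End Fin.

Theorem proposition5 (n : nat) (z : C) :
  ex_RInt_gen (V := C_R_NormedModule) (gamma_integrand n (Cplus z (RtoC (INR n))))
    (at_point 0) (Rbar_locally p_infty) /\
  calT n z = Cmult (Cexp (Cplus z (RtoC (INR n))))
                   (upper_gamma_nat n (Cplus z (RtoC (INR n)))).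
Proof.
set x : CC := Cplus z (RtoC (INR n)).
pose w k : CC := (x ^+ (n - k) *+ 'C(n, k) * Cexp (Copp x))%R.
have H : is_RInt_gen (V := C_R_NormedModule) (gamma_integrand n x) (at_point 0) (Rbar_locally p_infty)
   (\sum_(k < n.+1) (Cmult (RtoC (INR (Factorial.fact k))) (w k) : CC))%R.
  rewrite Fin.integrand_eq. exact: (sum_int n.+1 w).
split; first by exists (\sum_(k < n.+1) (Cmult (RtoC (INR (Factorial.fact k))) (w k) : CC))%R.
have U : upper_gamma_nat n x = (\sum_(k < n.+1) (Cmult (RtoC (INR (Factorial.fact k))) (w k) : CC))%R.
  rewrite /upper_gamma_nat. exact (@is_RInt_gen_unique C_R_CompleteNormedModule _ _ (Proper_StrongProper _ (at_point_filter 0)) (Proper_StrongProper _ (Rbar_locally_filter p_infty)) (gamma_integrand n x) _ H).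
rewrite U Fin.calT_eq Fin.mulCC GRing.mulr_sumr; apply: eq_bigr => k _.
rewrite /w factE -(natCC (k`!)) Fin.mulCC.
apply: Fin.fin_rearr.
exact: Cexp_inv.
Qed.
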